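(* Let $p=(b,a)_c\in C^1(G_k,\pi/[\pi]_3)$ be a $1$-cocycle, where $(b,a)_c(g)=y^{a(g)}x^{b(g)}[x,y]^{c(g)}$ with $b,a:G_k\to\hat{\mathbb Z}(1)$, $c:G_k\to\hat{\mathbb Z}(2)$. Then in ${\rm H}^2(G_k,\hat{\mathbb Z}(3))$: (1) $\delta_{3,[[x,y],x]}(p)=-\big(b+\frac{\chi-1}{2}\big)\cup c-\binom b2\cup a$; (2) $\delta_{3,[[x,y],y]}(p)=\big(a+\frac{\chi-1}2\big)\cup(ab-c)+\binom a2\cup b-f\cup a$.
   Context: Let $k$ be either a subfield of $\mathbb C$ or the completion of a number field $F\subset\mathbb C$ at a place, with fixed embeddings $\mathbb C\supset\overline{\mathbb Q}\subseteq\overline k$; $\chi$ the cyclotomic character. $\pi=\pi_1^{et}(\mathbb P^1_{\overline k}-\{0,1,\infty\},\overrightarrow{01})\cong\langle x,y\rangle^\wedge$ (profinite free group, $x$ loop around $0$, $y$ loop around $1$), $G_k$-action $\sigma(x)=x^{\chi(\sigma)}$, $\sigma(y)=\mathfrak f(\sigma)^{-1}y^{\chi(\sigma)}\mathfrak f(\sigma)$ with $\mathfrak f:G_k\to[\pi]_2$ a cocycle, and $f:G_k\to\hat{\mathbb Z}(2)$ defined by $\mathfrak f(\sigma)\equiv[x,y]^{f(\sigma)}\bmod[\pi]_3$. $[u,v]=uvu^{-1}v^{-1}$; $[\pi]_n$ lower central series; $\hat{\mathbb Z}(n)$ is $\hat{\mathbb Z}$ with action via $\chi^n$ (with $\hat{\mathbb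 Z}(1)$ identified with $\varprojlim\mu_n$ via $e^{2\pi i/n}$). $\delta_{3,[[x,y],x]},\delta_{3,[[x,y],y]}$ are the components, w.r.t. the basis $[[x,y],x],[[x,y],y]$ of $[\pi]_3/[\pi]_4\cong\hat{\mathbb Z}(3)^2$, of the connecting map of $1\to[\pi]_3/[\pi]_4\to\pi/[\pi]_4\to\pi/[\pi]_3\to1$. $\frac{\chi-1}2$ denotes the cochain $g\mapsto(\chi(g)-1)/2\in\hat{\mathbb Z}(1)$; $ab$ is $g\mapsto a(g)b(g)$; $\binom b2$ is $g\mapsto\binom{b(g)}2$ using profinite binomial coefficients ($\binom am\equiv a_{m!n}(a_{m!n}-1)\cdots(a_{m!n}-m+1)/m!\bmod n$, $a_{m!n}\equiv a\bmod m!n$). Cup product: $(c\cup d)(g,h)=c(g)\,g\cdot d(h)$. *)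

(* Defs.v *)
From HB Require Import structures.
From mathcomp Require Import all_boot all_order all_algebra.
From mathcomp Require Import all_classical topology.
Set Implicit Arguments. Unset Strict Implicit. Unset Printing Implicit Defensive.
Import Order.TTheory GRing.Theory Num.Theory.
Local Open Scope ring_scope.

(* Profinite integers  Zhat = lim_n Z/nZ.                                   *)
(* An element is represented by a family  z : nat -> int , where  z n       *)
(* is a representative of the residue modulo  n.+1 .  Equality of Zhat      *)
(* elements is [zeq] (congruence at every level); a representative family   *)
(* is a genuine element of Zhat when it is compatible ([zhat_valid]).       *)
Definition zhat := nat -> int.

Definition zhat_valid (z : zhat) : Prop :=
  forall m n : nat, (m.+1 %| n.+1)%N -> (z n = z m %[mod (m.+1)%:Z])%Z.

Definition zeq (z w : zhat) : Prop :=
  forall n : nat, (z n = w n %[mod (n.+1)%:Z])%Z.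

Definition zadd (z w : zhat) : zhat := fun n => z n + w n.
Definition zopp (z : zhat) : zhat := fun n => - z n.
Definition zsub (z w : zhat) : zhat := fun n => z n - w n.
Definition zmul (z w : zhat) : zhat := fun n => z n * w n.
Definition zexp (z : zhat) (k : nat) : zhat := fun n => z n ^+ k.
Definition zconst (k : int) : zhat := fun _ => k.

Definition zunit (z : zhat) : Prop :=
  forall n : nat, coprimez (z n) (n.+1)%:Z.

(* profinite binomial coefficient  binom(z, 2):  its residue mod N is
   z_{2N} (z_{2N} - 1) / 2 mod N, where z_{2N} represents z mod 2N
   (level 2n+1 has modulus 2(n+1)). *)
Definition zbinom2 (z : zhat) : zhat :=
  fun n => let t := z (2 * n + 1)%N in ((t * (t - 1)) %/ 2)%Z.

(* (u - 1)/2 for a unit u of Zhat (u is odd at every even level, so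
   (u_{2N} - 1)/2 mod N is the residue of (u-1)/2 mod N). *)
Definition zhalf_pred (u : zhat) : zhat :=
  fun n => ((u (2 * n + 1)%N - 1) %/ 2)%Z.

Section Grp.
Context {G : topologicalType} (gmul : G -> G -> G) (ginv : G -> G) (g1 : G).

Definition is_profinite_group : Prop :=
  [/\ (forall x y z, gmul x (gmul y z) = gmul (gmul x y) z),
      (forall x, gmul g1 x = x /\ gmul x g1 = x),
      (forall x, gmul (ginv x) x = g1 /\ gmul x (ginv x) = g1),
      continuous (fun p : G * G => gmul p.1 p.2) /\ continuous ginv &
      [/\ compact [set: G], hausdorff_space G & totally_disconnected [set: G]]].

(* continuity of a map G -> Zhat (Zhat with the inverse limit topology of
   the discrete Z/nZ): every reduction mod n.+1 is locally constant. *)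
Definition zcont (phi : G -> zhat) : Prop :=
  forall (n : nat) (g : G),
    nbhs g (fun g' : G => (phi g' n = phi g n %[mod (n.+1)%:Z])%Z).

Definition cochain1 (phi : G -> zhat) : Prop :=
  (forall g, zhat_valid (phi g)) /\ zcont phi.

Definition is_character (chi : G -> zhat) : Prop :=
  [/\ cochain1 chi, (forall g, zunit (chi g)) &
      (forall g h, zeq (chi (gmul g h)) (zmul (chi g) (chi h)))].

Definition twist (chi : G -> zhat) (j : nat) (g : G) (z : zhat) : zhat :=
  zmul (zexp (chi g) j) z.

Definition cocycle1 (chi : G -> zhat) (j : nat) (phi : G -> zhat) : Prop :=
  cochain1 phi /\
  forall g h, zeq (phi (gmul g h)) (zadd (phi g) (twist chi j g (phi h))).

Definition cobound (chi : G -> zhat) (j : nat) (e : G -> zhat) (g h : G) : zhat :=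
  zadd (zsub (twist chi j g (e h)) (e (gmul g h))) (e g).

Definition cup (chi : G -> zhat) (j : nat) (u w : G -> zhat) (g h : G) : zhat :=
  zmul (u g) (twist chi j g (w h)).

(* two 2-cochains with values in Zhat(j) are cohomologous, i.e. define the
   same class in H^2(G, Zhat(j)) (continuous cochain cohomology) *)
Definition cohomologous2 (chi : G -> zhat) (j : nat) (X Y : G -> G -> zhat) : Prop :=
  exists e : G -> zhat, cochain1 e /\
    forall g h, zeq (X g h) (zadd (Y g h) (cobound chi j e g h)).

End Grp.

(* pi/[pi]_4, pi = free profinite group on x, y.  Every element is uniquely *)
(*   y^a x^b [x,y]^c [[x,y],x]^d [[x,y],y]^e     (a,b,c,d,e in Zhat),        *)
(* with [u,v] = u v u^-1 v^-1.  The group law below is the (Hall) product   *)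
(* formula in these coordinates (checked against the Magnus embedding).     *)
(* pi/[pi]_3 is the quotient forgetting d, e; [pi]_3/[pi]_4 = {(0,0,0,d,e)}. *)
Record N4 := mkN4 { ny : zhat; nx : zhat; nz : zhat; nu : zhat; nv : zhat }.

Definition m4 (p q : N4) : N4 :=
  let: mkN4 a1 b1 c1 d1 e1 := p in
  let: mkN4 a2 b2 c2 d2 e2 := q in
  mkN4 (zadd a1 a2) (zadd b1 b2) (zadd (zadd c1 c2) (zmul a2 b1))
       (zadd (zadd (zadd d1 d2) (zmul c1 b2))
             (zadd (zmul (zmul a2 b1) b2) (zmul a2 (zadd (zbinom2 b1) b1))))
       (zadd (zadd (zadd e1 e2) (zmul c1 a2))
             (zmul b1 (zbinom2 (zadd a2 (zconst 1))))).

Definition inv4 (p : N4) : N4 :=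
  let: mkN4 a b c d e := p in
  mkN4 (zopp a) (zopp b) (zadd (zopp c) (zmul a b))
       (zadd (zadd (zopp d) (zmul c b))
             (zsub (zmul a (zadd (zbinom2 b) b)) (zmul (zmul a b) b)))
       (zsub (zadd (zopp e) (zmul c a)) (zmul b (zbinom2 a))).

Definition comm4 (p q : N4) : N4 := m4 (m4 p q) (m4 (inv4 p) (inv4 q)).

Definition zero5 := zconst 0.
Definition ypow (a : zhat) : N4 := mkN4 a zero5 zero5 zero5 zero5.
Definition xpow (b : zhat) : N4 := mkN4 zero5 b zero5 zero5 zero5.
Definition zpow (c : zhat) : N4 := mkN4 zero5 zero5 c zero5 zero5.

(* Zhat-powers inside the abelian subgroups  y^Zhat.[pi]_3  and  [pi]_2
   (modulo [pi]_4), where w^k is coordinatewise scaling. *)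
Definition pow_yv (k : zhat) (w : N4) : N4 :=
  mkN4 (zmul k (ny w)) zero5 zero5 zero5 (zmul k (nv w)).
Definition pow_xx (k : zhat) (w : N4) : N4 :=
  mkN4 zero5 (zmul k (nx w)) zero5 zero5 zero5.
Definition pow_g2 (k : zhat) (w : N4) : N4 :=
  mkN4 zero5 zero5 (zmul k (nz w)) (zmul k (nu w)) (zmul k (nv w)).

Section Action.
Context {G : Type} (chi f : G -> zhat).

(* sigma(x) = x^chi(sigma);  sigma(y) = ff^-1 y^chi(sigma) ff  where
   ff = frak f(sigma) = [x,y]^f(sigma) mod [pi]_3 (mod [pi]_4 sigma(y) only
   depends on ff mod [pi]_3). *)
Definition sig_x (g : G) : N4 := xpow (chi g).
Definition sig_y (g : G) : N4 := m4 (m4 (inv4 (zpow (f g))) (ypow (chi g))) (zpow (f g)).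

Definition act4 (g : G) (n : N4) : N4 :=
  let X := sig_x g in let Y := sig_y g in
  let Z := comm4 X Y in
  let U := comm4 Z X in let V := comm4 Z Y in
  m4 (m4 (m4 (m4 (pow_yv (ny n) Y) (pow_xx (nx n) X))
             (pow_g2 (nz n) Z)) (pow_g2 (nu n) U)) (pow_g2 (nv n) V).

Definition eq3 (p q : N4) : Prop :=
  [/\ zeq (ny p) (ny q), zeq (nx p) (nx q) & zeq (nz p) (nz q)].

Definition lift_bac (b a c : G -> zhat) (g : G) : N4 :=
  mkN4 (a g) (b g) (c g) zero5 zero5.

End Action.

Section Delta.
Context {G : Type} (gmul : G -> G -> G) (chi f : G -> zhat).

Definition is_pi3_cocycle (b a c : G -> zhat) : Prop :=
  forall g h, eq3 (lift_bac b a c (gmul g h))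
                  (m4 (lift_bac b a c g) (act4 chi f g (lift_bac b a c h))).

(* connecting map of 1 -> [pi]_3/[pi]_4 -> pi/[pi]_4 -> pi/[pi]_3 -> 1:
   delta(p)(g,h) = pt(g) g(pt(h)) pt(gh)^-1  for the lift pt of p;
   its components on the basis [[x,y],x], [[x,y],y]. *)
Definition delta_full (b a c : G -> zhat) (g h : G) : N4 :=
  let pt := lift_bac b a c in
  m4 (m4 (pt g) (act4 chi f g (pt h))) (inv4 (pt (gmul g h))).
Definition delta_xyx (b a c : G -> zhat) (g h : G) : zhat := nu (delta_full b a c g h).
Definition delta_xyy (b a c : G -> zhat) (g h : G) : zhat := nv (delta_full b a c g h).

End Delta.

Definition cadd {G : Type} (u w : G -> zhat) : G -> zhat := fun g => zadd (u g) (w g).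
Definition csub {G : Type} (u w : G -> zhat) : G -> zhat := fun g => zsub (u g) (w g).
Definition cmul {G : Type} (u w : G -> zhat) : G -> zhat := fun g => zmul (u g) (w g).
Definition cbinom2 {G : Type} (u : G -> zhat) : G -> zhat := fun g => zbinom2 (u g).
Definition chalf {G : Type} (chi : G -> zhat) : G -> zhat := fun g => zhalf_pred (chi g).
Definition cadd2 {G : Type} (X Y : G -> G -> zhat) : G -> G -> zhat :=
  fun g h => zadd (X g h) (Y g h).
Definition copp2 {G : Type} (X : G -> G -> zhat) : G -> G -> zhat :=
  fun g h => zopp (X g h).

(* Main.v *)
Require Import Defs.
From HB Require Import structures.
From mathcomp Require Import all_boot all_order all_algebra.
From mathcomp Require Import all_classical topology.
From mathcomp Require Import ring zify.
Import Order.TTheory GRing.Theory Num.Theory.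
Local Open Scope ring_scope.

Definition hb (t : int) : int := ((t * (t - 1)) %/ 2)%Z.
Definition hpr (t : int) : int := ((t - 1) %/ 2)%Z.

Lemma mod2_cases (t : int) : (t %% 2)%Z = 0 \/ (t %% 2)%Z = 1.
Proof.
have h0 := modz_ge0 t (d:=2) isT. have h1 := ltz_pmod t (d:=2) isT. lia.
Qed.

Lemma hb2 t : hb t * 2 = t * (t - 1).
Proof.
rewrite /hb divzK //; apply/dvdzP.
have E := divz_eq t 2%Z.
case: (mod2_cases t) => H; rewrite H ?addr0 in E.
- exists ((t %/ 2)%Z * (t - 1)); rewrite {1}E; ring.
- exists ((t %/ 2)%Z * t); rewrite {2}E; ring.
Qed.

Lemma hbE t K : K * 2 = t * (t - 1) -> hb t = K.
Proof. move=> H; apply: (@mulIf _ 2) => //; by rewrite hb2 H. Qed.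

Lemma hbD u v : hb (u + v) = hb u + hb v + u * v.
Proof.
apply: hbE; rewrite (_ : (hb u + hb v + u * v) * 2 = hb u * 2 + hb v * 2 + u*v*2); last by ring.
rewrite !hb2; ring.
Qed.
Lemma hbM u v : hb (u * v) = u ^+ 2 * hb v + v * hb u.
Proof.
apply: hbE; rewrite (_ : (u ^+ 2 * hb v + v * hb u) * 2 = u^+2 * (hb v * 2) + v * (hb u * 2)); last by ring.
rewrite !hb2; ring.
Qed.
Lemma hbN u : hb (- u) = hb u + u.
Proof.
apply: hbE; rewrite (_ : (hb u + u) * 2 = hb u * 2 + u * 2); last by ring.
rewrite !hb2; ring.
Qed.
Lemma hbD1 u : hb (u + 1) = hb u + u.
Proof.
apply: hbE; rewrite (_ : (hb u + u) * 2 = hb u * 2 + u * 2); last by ring.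
rewrite !hb2; ring.
Qed.
Lemma hb1N u : hb (- u + 1) = hb u.
Proof. apply: hbE; rewrite hb2; ring. Qed.

Lemma hb_mod (N : int) u v : (u = v %[mod (N * 2)])%Z -> (hb u = hb v %[mod N])%Z.
Proof.
move/eqP; rewrite eqz_mod_dvd => /dvdzP [k Hk].
have -> : u = v + N * 2 * k by rewrite (_ : N * 2 * k = u - v); [ring | rewrite Hk; ring].
apply/eqP; rewrite eqz_mod_dvd; apply/dvdzP.
exists (k * (N * 2 * k - 1) + 2 * v * k).
rewrite hbD (_ : hb (N * 2 * k) = N * k * (N * 2 * k - 1)); first by ring.
apply: hbE; ring.
Qed.

Lemma hpr_odd (x : int) (M : int) : coprimez x (M * 2) -> x = hpr x * 2 + 1.
Proof.
move=> cop.
have E := divz_eq x 2%Z.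
case: (mod2_cases x) => H; rewrite H ?addr0 in E.
- exfalso.
  have d2 : (2 %| gcdz x (M * 2))%Z.
    by rewrite dvdz_gcd; apply/andP; split; apply/dvdzP; [exists (x %/ 2)%Z | exists M].
  move: cop; rewrite /coprimez => /eqP Hg; rewrite Hg in d2. by [].
- rewrite /hpr {2}E addrK mulzK //.
Qed.

Lemma intrZp0 (p : nat) (z : int) : ((z%:~R : 'Z_p.+2) == 0) = ((p.+2)%:Z %| z)%Z.
Proof.
have p1 : (1 < p.+2)%N by [].
case: z => m.
- rewrite dvdzE /= /dvdn.
  rewrite -(inj_eq val_inj) /= (val_Zp_nat p1). by [].
- rewrite dvdzE /= oppr_eq0 /dvdn -(inj_eq val_inj) /= (val_Zp_nat p1). by [].
Qed.

Lemma castP (p : nat) (x y : int) : ((x%:~R : 'Z_p.+2) = y%:~R) <-> (x = y %[mod (p.+2)%:Z])%Z.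
Proof.
split => [H | /eqP H].
- apply/eqP; rewrite eqz_mod_dvd -intrZp0 intrD intrN H subrr. by [].
- move: H; rewrite eqz_mod_dvd -intrZp0 intrD intrN subr_eq0 => /eqP. by [].
Qed.


Lemma eq_lin (R : comPzRingType) (u v k t : R) : t = 0 -> u - v = k * t -> u = v.
Proof. by move=> t0 h; apply/eqP; rewrite -subr_eq0 h t0 mulr0. Qed.

Lemma core1 (n : nat) (x xL f1 a1 b1 c1 a2 b2 c2 a3 b3 c3 b1L b2L b3L : int) :
  (xL = x %[mod n.+1])%Z -> (b1L = b1 %[mod n.+1])%Z -> (b2L = b2 %[mod n.+1])%Z ->
  (a3 = a1 + a2 * x %[mod n.+1])%Z -> (b3 = b1 + b2 * x %[mod n.+1])%Z ->
  (c3 = c1 + c2 * (- f1 + f1 + x * x + (- (- f1 + f1) + - x * - x) + - x * x) + a2 * x * b1 %[mod n.+1])%Z ->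
  (b3L = b1L + b2L * xL %[mod (2 * n + 1).+1])%Z ->
  coprimez xL (2 * n + 1).+1 ->
  (c2 * (x * (hb (xL) + x) + - x * (hb (- xL) - x) + (- f1 + f1 + x * x) * - x + (- x * x * - x + - x * (hb (xL) + x))) + c1 * (b2 * x) + (a2 * x * b1 * (b2 * x) + a2 * x * (hb (b1L) + b1)) + (c3 * b3 + (a3 * (hb (b3L) + b3) - a3 * b3 * b3)) + (c1 + c2 * (- f1 + f1 + x * x + (- (- f1 + f1) + - x * - x) + - x * x) + a2 * x * b1) * - b3 + (- a3 * (b1 + b2 * x) * - b3 + - a3 * (hb (b1L + b2L * xL) + (b1 + b2 * x))) = - ((b1 + hpr (xL)) * (x ^+ 2 * c2)) - hb (b1L) * (x ^+ 1 * a2) + (x ^+ 3 * (- b2 * c2) - - b3 * c3 + - b1 * c1) %[mod n.+1])%Z.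
Proof.
case: n => [|p]; first by move=> *; rewrite !modz1.
move=> Hx Hb1 Hb2 Ha3 Hb3 Hc3 Hb3L cop.
have e2 : ((2 * p.+1 + 1).+1)%:Z = (p.+2)%:Z * 2 by lia.
rewrite e2 in Hb3L cop.
have hx := hpr_odd _ _ cop.
have hbb := hb_mod _ _ _ Hb3L.
move: (hpr xL) hx => hp hx.
have hbx : hb xL = xL * hp by apply: hbE; rewrite hx; ring.
rewrite hbN hbx.
have hB1 := hb2 b1L.
move: (hb b1L) hB1 => B1 hB1.
move: (hb b3L) (hb (b1L + b2L * xL)) hbb => B3 B12 hbb.
apply/castP.
move/castP: Hx; move/castP: Hb1; move/castP: Hb2; move/castP: Ha3; move/castP: Hb3; move/castP: Hc3; move/castP: hbb.
move/(congr1 (fun z : int => (z%:~R : 'Z_p.+2))): hx.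
move/(congr1 (fun z : int => (z%:~R : 'Z_p.+2))): hB1.
rewrite !(intrD, intrM, intrN, intrB, rmorphXn) /=.
move=> hB1 hx hbb Hc3 Hb3 Ha3 Hb2 Hb1 Hx.
rewrite hbb Ha3 Hb3 Hc3.
have hX : (x%:~R : 'Z_p.+2) = hp%:~R * (1%:~R + 1%:~R) + 1%:~R by rewrite -hx Hx expr1.
rewrite ?Hx ?Hb1 ?Hb2 hX.
apply: (@eq_lin _ _ _ (a2%:~R * (hp%:~R * (1%:~R + 1%:~R) + 1%:~R)) (B1%:~R * (1%:~R + 1%:~R) - b1%:~R * (b1%:~R - 1%:~R))).
- by rewrite hB1 Hb1 subrr.
- ring.
Qed.

Lemma core2 (n : nat) (x xL f1 a1 b1 c1 a2 b2 c2 a3 b3 c3 a1L a2L a3L : int) :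
  (xL = x %[mod n.+1])%Z -> (a1L = a1 %[mod n.+1])%Z -> (a2L = a2 %[mod n.+1])%Z ->
  (a3 = a1 + a2 * x %[mod n.+1])%Z -> (b3 = b1 + b2 * x %[mod n.+1])%Z ->
  (c3 = c1 + c2 * (- f1 + f1 + x * x + (- (- f1 + f1) + - x * - x) + - x * x) + a2 * x * b1 %[mod n.+1])%Z ->
  (a3L = a1L + a2L * xL %[mod (2 * n + 1).+1])%Z ->
  coprimez xL (2 * n + 1).+1 ->
  (a2 * (- f1 * x) + c2 * (- f1 * x + x * hb (xL + 1) + (- (- f1 * x) + (- f1 + f1) * x + - x * hb (- xL + 1)) + (- f1 + f1 + x * x) * - x + x * hb (- xL + 1)) + c1 * (a2 * x) + b1 * hb (a2L * xL + 1) + (c3 * a3 - b3 * hb (a3L)) + (c1 + c2 * (- f1 + f1 + x * x + (- (- f1 + f1) + - x * - x) + - x * x) + a2 * x * b1) * - a3 + (b1 + b2 * x) * hb (- a3L + 1) = (a1 + hpr (xL)) * (x ^+ 2 * (a2 * b2 - c2)) + hb (a1L) * (x ^+ 1 * b2) - f1 * (x ^+ 1 * a2) + (x ^+ 3 * (b2 * hb (a2L) - a2 * c2) - (b3 * hb (a3L) - a3 * c3) + (b1 * hb (a1L) - a1 * c1)) %[mod n.+1])%Z.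
Proof.
case: n => [|p]; first by move=> *; rewrite !modz1.
move=> Hx Ha1 Ha2 Ha3 Hb3 Hc3 Ha3L cop.
have e2 : ((2 * p.+1 + 1).+1)%:Z = (p.+2)%:Z * 2 by lia.
rewrite e2 in Ha3L cop.
have hx := hpr_odd _ _ cop.
have hbb := hb_mod _ _ _ Ha3L.
move: (hpr xL) hx => hp hx.
have hbx : hb xL = xL * hp by apply: hbE; rewrite hx; ring.
rewrite !hb1N !hbD1 hbM hbx.
rewrite hbD hbM hbx in hbb.
have hA2 := hb2 a2L.
move: (hb a1L) (hb a2L) (hb a3L) hA2 hbb => A1 A2 A3 hA2 hbb.
apply/castP.
move/castP: Hx; move/castP: Ha1; move/castP: Ha2; move/castP: Ha3; move/castP: Hb3; move/castP: Hc3; move/castP: hbb.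
move/(congr1 (fun z : int => (z%:~R : 'Z_p.+2))): hx.
move/(congr1 (fun z : int => (z%:~R : 'Z_p.+2))): hA2.
rewrite !(intrD, intrM, intrN, intrB, rmorphXn) /=.
move=> hA2 hx hbb Hc3 Hb3 Ha3 Ha2 Ha1 Hx.
rewrite hbb Ha3 Hb3 Hc3.
have hX : (x%:~R : 'Z_p.+2) = hp%:~R * (1%:~R + 1%:~R) + 1%:~R by rewrite -hx Hx expr1.
rewrite ?Hx ?Ha1 ?Ha2 hX.
apply: (@eq_lin _ _ _ (b1%:~R * (hp%:~R * (1%:~R + 1%:~R) + 1%:~R) - b2%:~R * hp%:~R * (hp%:~R * (1%:~R + 1%:~R) + 1%:~R) ^+ 2) (A2%:~R * (1%:~R + 1%:~R) - a2%:~R * (a2%:~R - 1%:~R))).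
- by rewrite hA2 Ha2 subrr.
- ring.
Qed.

Arguments hb : simpl never.
Arguments hpr : simpl never.
Arguments zbinom2 : simpl never.
Arguments zhalf_pred : simpl never.
Lemma zbinom2E z n : zbinom2 z n = hb (z (2 * n + 1)%N). Proof. by []. Qed.
Lemma zhalf_predE z n : zhalf_pred z n = hpr (z (2 * n + 1)%N). Proof. by []. Qed.

Lemma cmodD (d x x' y y' : int) : (x = x' %[mod d])%Z -> (y = y' %[mod d])%Z -> (x + y = x' + y' %[mod d])%Z.
Proof. by move=> H1 H2; rewrite -modzDm H1 H2 modzDm. Qed.
Lemma cmodM (d x x' y y' : int) : (x = x' %[mod d])%Z -> (y = y' %[mod d])%Z -> (x * y = x' * y' %[mod d])%Z.
Proof. by move=> H1 H2; rewrite -modzMm H1 H2 modzMm. Qed.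
Lemma cmodN (d x x' : int) : (x = x' %[mod d])%Z -> (- x = - x' %[mod d])%Z.
Proof. by move=> H1; rewrite -modzNm H1 modzNm. Qed.

Lemma dvd2 (m n : nat) : (m.+1 %| n.+1)%N -> ((2 * m + 1).+1 %| (2 * n + 1).+1)%N.
Proof.
move=> d.
rewrite (_ : (2 * m + 1).+1 = 2 * m.+1)%N; last by lia.
rewrite (_ : (2 * n + 1).+1 = 2 * n.+1)%N; last by lia.
by rewrite dvdn_pmul2l.
Qed.

Lemma mod2conv (n : nat) : ((2 * n + 1).+1)%:Z = (n.+1)%:Z * 2.
Proof. by lia. Qed.

Lemma valid_mul z w : zhat_valid z -> zhat_valid w -> zhat_valid (zmul z w).
Proof. by move=> vz vw m n d; apply: cmodM; [apply: vz | apply: vw]. Qed.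
Lemma valid_opp z : zhat_valid z -> zhat_valid (zopp z).
Proof. by move=> vz m n d; apply: cmodN; apply: vz. Qed.
Lemma valid_sub z w : zhat_valid z -> zhat_valid w -> zhat_valid (zsub z w).
Proof. by move=> vz vw m n d; apply: cmodD; [apply: vz | apply: cmodN; apply: vw]. Qed.
Lemma valid_binom z : zhat_valid z -> zhat_valid (zbinom2 z).
Proof.
move=> vz m n d; rewrite !zbinom2E; apply: hb_mod.
rewrite -mod2conv; apply: vz; exact: dvd2.
Qed.

Lemma lvl (z : zhat) n : zhat_valid z -> (z (2 * n + 1)%N = z n %[mod n.+1])%Z.
Proof.
move=> v; apply: v.
rewrite (_ : (2 * n + 1).+1 = n.+1 * 2)%N; last by lia.
exact: dvdn_mulr.
Qed.

Section Cont.
Variable G : topologicalType.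
Lemma cont_mul (phi psi : G -> zhat) : zcont phi -> zcont psi -> zcont (fun g => zmul (phi g) (psi g)).
Proof.
move=> cp cq n g.
apply: (filterS2 _ _ (cp n g) (cq n g)) => g' h1 h2; exact: cmodM.
Qed.
Lemma cont_opp (phi : G -> zhat) : zcont phi -> zcont (fun g => zopp (phi g)).
Proof. by move=> cp n g; apply: filterS (cp n g) => g' h1; exact: cmodN. Qed.
Lemma cont_sub (phi psi : G -> zhat) : zcont phi -> zcont psi -> zcont (fun g => zsub (phi g) (psi g)).
Proof.
move=> cp cq n g.
apply: (filterS2 _ _ (cp n g) (cq n g)) => g' h1 h2; apply: cmodD => //; exact: cmodN.
Qed.
Lemma cont_binom (phi : G -> zhat) : zcont phi -> zcont (fun g => zbinom2 (phi g)).
Proof.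
move=> cp n g; apply: filterS (cp (2 * n + 1)%N g) => g' h1.
rewrite !zbinom2E; apply: hb_mod; by rewrite -mod2conv.
Qed.
End Cont.

Theorem proposition12p3
  (G : topologicalType) (gmul : G -> G -> G) (ginv : G -> G) (g1 : G)
  (chi f b a c : G -> zhat) :
  is_profinite_group gmul ginv g1 ->
  is_character gmul chi ->
  cocycle1 gmul chi 2 f ->
  cochain1 b -> cochain1 a -> cochain1 c ->
  is_pi3_cocycle gmul chi f b a c ->
  (* (1) delta_{3,[[x,y],x]}(p) = -(b + (chi-1)/2) u c - binom(b,2) u a *)
  cohomologous2 gmul chi 3
    (delta_xyx gmul chi f b a c)
    (cadd2 (copp2 (cup chi 2 (cadd b (chalf chi)) c))
           (copp2 (cup chi 1 (cbinom2 b) a)))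
  /\
  (* (2) delta_{3,[[x,y],y]}(p) = (a + (chi-1)/2) u (ab - c) + binom(a,2) u b - f u a *)
  cohomologous2 gmul chi 3
    (delta_xyy gmul chi f b a c)
    (cadd2 (cadd2 (cup chi 2 (cadd a (chalf chi)) (csub (cmul a b) c))
                  (cup chi 1 (cbinom2 a) b))
           (copp2 (cup chi 1 f a))).
Proof.
move=> _ [[chiV chiC] chiU _] _ [bV bC] [aV aC] [cV cC] coc.
split.
- exists (fun g => zmul (zopp (b g)) (c g)); split.
  + split => [g|]; first by apply: valid_mul; [apply: valid_opp|].
    apply: (@cont_mul _ (fun g => zopp (b g)) c) => //; exact: cont_opp.
  + move=> g h.
    have [E1 E2 E3] := coc g h.
    move=> n.
    have Ha3 := E1 n. have Hb3 := E2 n. have Hc3 := E3 n.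
    have Hb3L := E2 (2 * n + 1)%N.
    move: Ha3 Hb3 Hc3 Hb3L.
    rewrite /act4 /= /zadd /zmul /zsub /zopp /zexp /zero5 /zconst /= ?zbinom2E /=.
    rewrite ?(add0r, addr0, mul0r, mulr0, subr0, sub0r, oppr0).
    move=> Ha3 Hb3 Hc3 Hb3L.
    rewrite /delta_xyx /delta_full /act4 /cadd2 /copp2 /cup /cadd /chalf /csub /cmul /cbinom2 /cobound /twist /= /zadd /zmul /zsub /zopp /zexp /zero5 /zconst /= ?zbinom2E ?zhalf_predE /=.
    rewrite ?(add0r, addr0, mul0r, mulr0, subr0, sub0r, oppr0).
    exact: (core1 _ _ _ _ _ _ _ _ _ _ _ _ _ _ _ _ (lvl _ _ (chiV g)) (lvl _ _ (bV g)) (lvl _ _ (bV h)) Ha3 Hb3 Hc3 Hb3L (chiU g (2 * n + 1)%N)).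
- exists (fun g => zsub (zmul (b g) (zbinom2 (a g))) (zmul (a g) (c g))); split.
  + split => [g|].
      by apply: valid_sub; apply: valid_mul => //; apply: valid_binom.
    apply: (@cont_sub _ (fun g => zmul (b g) (zbinom2 (a g))) (fun g => zmul (a g) (c g))).
      apply: (@cont_mul _ b (fun g => zbinom2 (a g))) => //; exact: cont_binom.
    exact: cont_mul.
  + move=> g h.
    have [E1 E2 E3] := coc g h.
    move=> n.
    have Ha3 := E1 n. have Hb3 := E2 n. have Hc3 := E3 n.
    have Ha3L := E1 (2 * n + 1)%N.
    move: Ha3 Hb3 Hc3 Ha3L.
    rewrite /act4 /= /zadd /zmul /zsub /zopp /zexp /zero5 /zconst /= ?zbinom2E /=.
    rewrite ?(add0r, addr0, mul0r, mulr0, subr0, sub0r, oppr0).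
    move=> Ha3 Hb3 Hc3 Ha3L.
    rewrite /delta_xyy /delta_full /act4 /cadd2 /copp2 /cup /cadd /chalf /csub /cmul /cbinom2 /cobound /twist /= /zadd /zmul /zsub /zopp /zexp /zero5 /zconst /= ?zbinom2E ?zhalf_predE /=.
    rewrite ?(add0r, addr0, mul0r, mulr0, subr0, sub0r, oppr0).
    exact: (core2 _ _ _ _ _ _ _ _ _ _ _ _ _ _ _ _ (lvl _ _ (chiV g)) (lvl _ _ (aV g)) (lvl _ _ (aV h)) Ha3 Hb3 Hc3 Ha3L (chiU g (2 * n + 1)%N)).
Qed.
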